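(* Fix a node $n$ of the control flow graph and regard its extractor functions as functions of their inputs: $\mathit{Def}(a)$, $\mathit{Kill}(a)$, $\mathit{Pointee}(a)$ (with $A$ replaced by $a$) and $\mathit{Ref}(l,a)$ (with $A$ replaced by $a$ and $\mathit{Lout}_n$ replaced by $l$), for $l \subseteq \mathbf{P}$ and $a \subseteq \mathbf{P}\times\mathbf{V}$. Define $$f_L(l,a) = (l - \mathit{Kill}(a)) \cup \mathit{Ref}(l,a),\qquad f_A(l,a) = \Big(\big(a - (\mathit{Kill}(a)\times \mathbf{V})\big)\cup\big(\mathit{Def}(a)\times \mathit{Pointee}(a)\big)\Big)\Big|_{l}.$$ Then $f_L$ and $f_A$ are monotonic with respect to the data-flow order: for all $l_1,l_2\subseteq\mathbf{P}$ and $a_1,a_2\subseteq \mathbf{P}\times\mathbf{V}$ with $l_1\supseteq l_2$ and $a_1\supseteq a_2$, we have $f_L(l_1,a_1)\supseteq f_L(l_2,a_2)$ and $f_A(l_1,a_1)\supseteq f_A(l_2,a_2)$.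
   Context: $\mathbf{V}$ is a finite set of variables, $\mathbf{P}\subseteq\mathbf{V}$ the set of pointer variables, and $\mathbf{V}\setminus\mathbf{P}$ contains a special element $?$ (undefined location). Every node (statement) is of one of the forms: ''use $x$'', ''$x=\&a$'', ''$x=y$'', ''$x=*y$'', ''$*x=y$'', or ''other'', where $x,y\in\mathbf{P}$, $a\in\mathbf{V}$. Relation notation for $R\subseteq\mathbf{P}\times\mathbf{V}$ and a set $X$: $R\,X=\{v\mid u\in X,\ (u,v)\in R\}$; $R|_X=\{(u,v)\in R\mid u\in X\}$; $R^2=\{(u,w)\mid (u,v)\in R,\ (v,w)\in R\}$ (so necessarily $v\in\mathbf{P}$). $\mathit{Must}(R)=\bigcup_{x\in\mathbf{P}}\{x\}\times M_x$, where $M_x=\mathbf{V}$ if $R|_{\{x\}}=\emptyset$ or $R|_{\{x\}}=\{(x,?)\}$; $M_x=\{y\}$ if $R|_{\{x\}}=\{(x,y)\}$ with $y\neq ?$; and $M_x=\emptyset$ otherwise. Extractor functions of node $n$, given a points-to relation $A\subseteq\mathbf{P}\times\mathbf{V}$ and a set $L\subseteq\mathbf{P}$ (in the analysis $A=\mathit{Ain}_n$, $L=\mathit{Lout}_n$): - use $x$: $\mathit{Def}=\emptyset$, $\mathit{Kill}=\emptyset$, $\mathit{Ref}=\{x\}$, $\mathit{Pointee}=\emptyset$. - $x=\&a$: $\mathit{Def}=\{x\}$, $\mathit{Kill}=\{x\}$, $\mathit{Ref}=\emptyset$, $\mathit{Pointee}=\{a\}$. - $x=y$: $\mathit{Def}=\{x\}$,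 $\mathit{Kill}=\{x\}$, $\mathit{Ref}=\{y\}$ if $\mathit{Def}\cap L\neq\emptyset$ and $\emptyset$ otherwise, $\mathit{Pointee}=A\{y\}$. - $x=*y$: $\mathit{Def}=\{x\}$, $\mathit{Kill}=\{x\}$, $\mathit{Ref}=\{y\}\cup\big((A\{y\})\cap\mathbf{P}\big)$ if $\mathit{Def}\cap L\neq\emptyset$ and $\emptyset$ otherwise, $\mathit{Pointee}=A^2\{y\}$. - $*x=y$: $\mathit{Def}=(A\{x\})\cap\mathbf{P}$, $\mathit{Kill}=(\mathit{Must}(A)\{x\})\cap\mathbf{P}$, $\mathit{Ref}=\{x,y\}$ if $\mathit{Def}\cap L\neq\emptyset$ and $\{x\}$ otherwise, $\mathit{Pointee}=A\{y\}$. - other: all four are $\emptyset$. *)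

(* Defs.v *)
From mathcomp Require Import all_boot.
Set Implicit Arguments.
Unset Strict Implicit.
Unset Printing Implicit Defensive.

Section PointsTo.
(* V : finite set of variables, P : pointer variables, q : the undefined location "?" *)
Variables (V : finType) (P : {set V}) (q : V).

Definition rel_t := {set V * V}.

Definition rimg (R : rel_t) (X : {set V}) : {set V} :=
  [set v | [exists u in X, (u, v) \in R]].

Definition rrestr (R : rel_t) (X : {set V}) : rel_t :=
  [set p in R | p.1 \in X].

Definition rsq (R : rel_t) : rel_t :=
  [set p : V * V | [exists v, ((p.1, v) \in R) && ((v, p.2) \in R)]].

Definition Mset (R : rel_t) (x : V) : {set V} :=
  let Rx := rrestr R [set x] in
  if (Rx == set0) || (Rx == [set (x, q)]) then setT
  else if [pick y | (y != q) && (Rx == [set (x, y)])] is Some y then [set y]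
  else set0.

Definition Must (R : rel_t) : rel_t :=
  [set p : V * V | (p.1 \in P) && (p.2 \in Mset R p.1)].

Inductive node :=
| NUse   of V
| NAddr  of V & V      (* x = &a *)
| NCopy  of V & V      (* x = y *)
| NLoad  of V & V      (* x = *y *)
| NStore of V & V      (* *x = y *)
| NOther.

Definition node_wf (n : node) : bool :=
  match n with
  | NUse x => x \in P
  | NAddr x _ => x \in P
  | NCopy x y | NLoad x y | NStore x y => (x \in P) && (y \in P)
  | NOther => true
  end.

Definition Def (n : node) (A : rel_t) : {set V} :=
  match n with
  | NUse _ => set0
  | NAddr x _ | NCopy x _ | NLoad x _ => [set x]
  | NStore x _ => rimg A [set x] :&: P
  | NOther => set0
  end.

Definition Kill (n : node) (A : rel_t) : {set V} :=
  match n with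
  | NUse _ => set0
  | NAddr x _ | NCopy x _ | NLoad x _ => [set x]
  | NStore x _ => rimg (Must A) [set x] :&: P
  | NOther => set0
  end.

Definition Ref (n : node) (L : {set V}) (A : rel_t) : {set V} :=
  match n with
  | NUse x => [set x]
  | NAddr _ _ => set0
  | NCopy _ y => if Def n A :&: L != set0 then [set y] else set0
  | NLoad _ y =>
      if Def n A :&: L != set0 then [set y] :|: (rimg A [set y] :&: P) else set0
  | NStore x y => if Def n A :&: L != set0 then [set x; y] else [set x]
  | NOther => set0
  end.

Definition Pointee (n : node) (A : rel_t) : {set V} :=
  match n with
  | NUse _ => set0
  | NAddr _ a => [set a]
  | NCopy _ y => rimg A [set y]
  | NLoad _ y => rimg (rsq A) [set y]
  | NStore _ y => rimg A [set y]
  | NOther => set0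
  end.

Definition fL (n : node) (l : {set V}) (a : rel_t) : {set V} :=
  (l :\: Kill n a) :|: Ref n l a.

Definition fA (n : node) (l : {set V}) (a : rel_t) : rel_t :=
  rrestr ((a :\: setX (Kill n a) setT) :|: setX (Def n a) (Pointee n a)) l.

End PointsTo.

(* Main.v *)
Require Import Defs.
From mathcomp Require Import all_boot.

Section Aux.
Variables (V : finType) (P : {set V}) (q : V).

Lemma rimg_mono (R1 R2 : {set V * V}) (X1 X2 : {set V}) :
  R1 \subset R2 -> X1 \subset X2 -> rimg R1 X1 \subset rimg R2 X2.
Proof.
move=> sR sX; apply/subsetP => v; rewrite !inE => /existsP[u /andP[uX uR]].
by apply/existsP; exists u; rewrite (subsetP sX _ uX) (subsetP sR _ uR).
Qed.

Lemma rsq_mono (R1 R2 : {set V * V}) : R1 \subset R2 -> rsq R1 \subset rsq R2.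
Proof.
move=> sR; apply/subsetP => p; rewrite !inE => /existsP[u /andP[h1 h2]].
by apply/existsP; exists u; rewrite (subsetP sR _ h1) (subsetP sR _ h2).
Qed.

Lemma rrestr_mono (R1 R2 : {set V * V}) (X1 X2 : {set V}) :
  R1 \subset R2 -> X1 \subset X2 -> rrestr R1 X1 \subset rrestr R2 X2.
Proof.
move=> sR sX; apply/subsetP => p; rewrite !inE => /andP[h1 h2].
by rewrite (subsetP sR _ h1) (subsetP sX _ h2).
Qed.

Lemma Mset_anti (a1 a2 : {set V * V}) x :
  a2 \subset a1 -> Mset q a1 x \subset Mset q a2 x.
Proof.
move=> sub; rewrite /Mset.
set R1 := rrestr a1 [set x]; set R2 := rrestr a2 [set x].
have sR : R2 \subset R1 by apply: rrestr_mono.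
have key : forall p, R1 == [set p] -> (R2 == [set p]) || (R2 == set0).
  by move=> p /eqP E; rewrite -subset1 -E.
case H2: ((R2 == set0) || (R2 == [set (x, q)])); first exact: subsetT.
move/negbT: H2; rewrite negb_or => /andP[n0 nq].
case: (pickP (fun y => (y != q) && (R2 == [set (x, y)]))) => [y /andP[yq /eqP E2] | none2].
- case: ifP => [/orP[/eqP E1|/eqP E1] | _].
  + by move: sR; rewrite E1 subset0 (negbTE n0).
  + have: (x,y) \in R1 by apply: (subsetP sR); rewrite E2 set11.
    by rewrite E1 inE => /eqP [] yq'; rewrite yq' eqxx in yq.
  + case: pickP => [z /andP[_ /eqP E1] | _]; last exact: sub0set.
    have: (x,y) \in R1 by apply: (subsetP sR); rewrite E2 set11.
    by rewrite E1 inE => /eqP[->]; exact: subxx.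
- case: ifP => [/orP[/eqP E1|/eqP E1]|_].
  + by move: sR; rewrite E1 subset0 (negbTE n0).
  + by move: (key _ (introT eqP E1)); rewrite (negbTE n0) (negbTE nq).
  + case: pickP => [z /andP[zq E1] | _]; last exact: subxx.
    move: (key _ E1); rewrite (negbTE n0) orbF => E2.
    by move: (none2 z); rewrite zq E2.
Qed.

Lemma Must_anti (a1 a2 : {set V * V}) :
  a2 \subset a1 -> Must P q a1 \subset Must P q a2.
Proof.
move=> sa; apply/subsetP => p; rewrite !inE => /andP[-> h] /=.
exact: (subsetP (Mset_anti _ _ p.1 sa)) _ h.
Qed.

Lemma Kill_anti n (a1 a2 : {set V * V}) :
  a2 \subset a1 -> Kill P q n a1 \subset Kill P q n a2.
Proof.
move=> sa; case: n => //= *; rewrite ?subxx //.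
by apply: setSI; apply: rimg_mono (subxx _); apply: Must_anti.
Qed.

Lemma Def_mono n (a1 a2 : {set V * V}) :
  a2 \subset a1 -> Def P n a2 \subset Def P n a1.
Proof.
move=> sa; case: n => //= *; rewrite ?subxx //.
by apply: setSI; apply: rimg_mono (subxx _).
Qed.

Lemma Pointee_mono n (a1 a2 : {set V * V}) :
  a2 \subset a1 -> Pointee n a2 \subset Pointee n a1.
Proof.
move=> sa; case: n => //= *; rewrite ?subxx //;
  apply: rimg_mono (subxx _) => //; exact: rsq_mono.
Qed.

Lemma ne0_mono (A B : {set V}) : A \subset B -> A != set0 -> B != set0.
Proof.
move=> sAB /set0Pn[x xA]; apply/set0Pn; exists x; exact: (subsetP sAB).
Qed.

Lemma Ref_mono n (l1 l2 : {set V}) (a1 a2 : {set V * V}) :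
  l2 \subset l1 -> a2 \subset a1 -> Ref P n l2 a2 \subset Ref P n l1 a1.
Proof.
move=> sl sa.
have hD : Def P n a2 :&: l2 != set0 -> Def P n a1 :&: l1 != set0.
  by apply: ne0_mono; apply: setISS => //; apply: Def_mono.
case: n hD => [x|x a|x y|x y|x y|] /= hD; rewrite ?subxx //.
- case: ifP => h2; last exact: sub0set.
  by rewrite (hD h2) subxx.
- case: ifP => h2; last exact: sub0set.
  rewrite (hD h2); apply: setUS; apply: setSI; exact: rimg_mono.
- case: ifP => h2; first by rewrite (hD h2) subxx.
  by case: ifP => _ //; rewrite ?subxx // subsetUl.
Qed.

Lemma theorem1_aux n (l1 l2 : {set V}) (a1 a2 : {set V * V}) :
  l2 \subset l1 -> a2 \subset a1 ->
  fL P q n l2 a2 \subset fL P q n l1 a1 /\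
  fA P q n l2 a2 \subset fA P q n l1 a1.
Proof.
move=> sl sa; split.
- apply: setUSS; first by apply: setDSS => //; apply: Kill_anti.
  exact: Ref_mono.
- apply: rrestr_mono => //; apply: setUSS.
  + by apply: setDSS => //; apply: setXS (subxx _); apply: Kill_anti.
  + by apply: setXS; [apply: Def_mono | apply: Pointee_mono].
Qed.
End Aux.

Theorem theorem1 (V : finType) (P : {set V}) (q : V) (n : node V) :
  q \notin P -> node_wf P n ->
  forall (l1 l2 : {set V}) (a1 a2 : {set V * V}),
    l1 \subset P -> l2 \subset P ->
    a1 \subset setX P setT -> a2 \subset setX P setT ->
    l2 \subset l1 -> a2 \subset a1 ->
    fL P q n l2 a2 \subset fL P q n l1 a1 /\
    fA P q n l2 a2 \subset fA P q n l1 a1.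
Proof.
move=> _ _ l1 l2 a1 a2 _ _ _ _ sl sa; exact: theorem1_aux.
Qed.
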